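(* Let $f:2^N\to\mathbb R_{\ge0}$ be monotone submodular, $|N|=n$, $1\le k\le n$, and $S^\star\in\arg\max_{|T|\le k}f(T)$. Given at least $n\log n$ samples, each a uniformly random subset of $N$ of size $k$ (drawn independently), the sample $S$ of largest value satisfies $f(S)\ge f(S^\star)/k$ with high probability (failure probability polynomially small in $n$).
   Context: $f$ monotone: $f(A)\le f(B)$ for $A\subseteq B$; submodular: $f(A\cup\{e\})-f(A)\ge f(B\cup\{e\})-f(B)$ for $A\subseteq B$. *)

(* Defs.v *)
From HB Require Import structures.
From mathcomp Require Import all_boot all_order all_algebra.
From mathcomp Require Import reals exp.
Set Implicit Arguments. Unset Strict Implicit. Unset Printing Implicit Defensive.
Import Order.TTheory GRing.Theory Num.Theory.
Local Open Scope ring_scope.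

Definition monotone_setfun (T : finType) (R : numDomainType) (f : {set T} -> R) :=
  forall A B : {set T}, A \subset B -> f A <= f B.

Definition submodular_setfun (T : finType) (R : numDomainType) (f : {set T} -> R) :=
  forall (A B : {set T}) (e : T), A \subset B ->
    f (e |: B) - f B <= f (e |: A) - f A.

(* Sample space of m independent uniformly random size-k subsets of T:
   all m-tuples (indexed by 'I_m) of k-subsets, with the uniform distribution. *)
Definition ksamples (T : finType) (k m : nat) : {set {ffun 'I_m -> {set T}}} :=
  [set s : {ffun 'I_m -> {set T}} | [forall i, #|s i| == k]].

Definition uprob (R : numFieldType) (X : finType) (Om E : {set X}) : R :=
  #|E :&: Om|%:R / #|Om|%:R.

(* Value of the best (largest-value) sample; f is nonnegative so 0 is a
   neutral element for max. *)
Definition best_value (T : finType) (R : realDomainType) (m : nat)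
  (f : {set T} -> R) (s : {ffun 'I_m -> {set T}}) : R :=
  \big[Num.max/0]_(i < m) f (s i).

(* Main.v *)
Require Import Defs.
From HB Require Import structures.
From mathcomp Require Import all_boot all_order all_algebra.
From mathcomp Require Import reals exp sequences ring lra.
Import Order.TTheory GRing.Theory Num.Theory.
Local Open Scope ring_scope.

Lemma sub_bound (R : realType) (N : finType) (f : {set N} -> R) (e : N) :
  submodular_setfun f ->
  (forall x, f [set x] <= f [set e]) ->
  forall A, f A <= f set0 + #|A|%:R * (f [set e] - f set0).
Proof.
move=> sub He A.
move: {2}#|A| (erefl #|A|) => n; elim: n A => [|n IH] A hA.
  have: #|A| == 0%N by rewrite hA. rewrite cards_eq0 => /eqP ->. by rewrite cards0 mul0r addr0.
have: (0 < #|A|)%N by rewrite hA.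
case/card_gt0P => x xA.
have hA' : #|A :\ x| = n by move: hA; rewrite (cardsD1 x A) xA add1n => -[].
have := IH _ hA'.
have := sub set0 (A :\ x) x (sub0set _).
rewrite setD1K // setU0 => h1 h2.
have := He x.
rewrite -mulr_natl (cardsD1 x A) xA natrD mulrDl mul1r.
move: h1 h2; rewrite mulr_natl => h1 h2 h3.
rewrite -mulr_natl in h2. rewrite mulr1 mulrDl mul1r. lra.
Qed.

Lemma real_bound (R : realType) (a b n k m : nat) :
  (n * a = (n - k) * b)%N -> (0 < b)%N -> (1 <= k)%N -> (k <= n)%N ->
  n%:R * ln (n%:R : R) <= m%:R ->
  (a ^ m)%:R / (b ^ m)%:R <= (n%:R : R)^-1.
Proof.
move=> hab b0 k1 kn hm.
have n0 : (0 < n)%N by apply: leq_trans kn.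
have nR : 0 < (n%:R : R) by rewrite ltr0n.
have bR : 0 < (b%:R : R) by rewrite ltr0n.
have hq : (a%:R / b%:R : R) = 1 - k%:R / n%:R.
  have : (n%:R * a%:R : R) = (n%:R - k%:R) * b%:R by rewrite -natrB // -!natrM hab.
  move=> h.
  have ha : (a%:R : R) = (n%:R - k%:R) * b%:R / n%:R.
    by rewrite -h; field; rewrite lt0r_neq0.
  rewrite ha; field; rewrite ?lt0r_neq0 //.
have q0 : 0 <= (a%:R / b%:R : R) by rewrite divr_ge0.
have q1 : (a%:R / b%:R : R) <= expR (- (n%:R)^-1).
  rewrite hq; apply: le_trans (expR_ge1Dx _).
  have : (n%:R)^-1 <= (k%:R / n%:R : R).
    by rewrite ler_pdivlMr // mulVf ?lt0r_neq0 // ler1n.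
  lra.
rewrite !natrX -expr_div_n.
apply: le_trans (lerXn2r m _ _ q1) _; rewrite ?nnegrE ?expR_ge0 //.
rewrite -expRM_natr -[X in _ <= X^-1]lnK ?posrE // -expRN ler_expR.
rewrite mulNr lerN2 ler_pdivlMl //.
Qed.

Theorem lemma24 (R : realType) (N : finType) (f : {set N} -> R)
  (k m : nat) (Sstar : {set N}) :
  (forall A, 0 <= f A) ->
  monotone_setfun f ->
  submodular_setfun f ->
  (1 <= k)%N -> (k <= #|N|)%N ->
  (#|Sstar| <= k)%N ->
  (forall T : {set N}, (#|T| <= k)%N -> f T <= f Sstar) ->
  #|N|%:R * ln (#|N|%:R : R) <= m%:R ->
  uprob R (ksamples N k m)
    [set s | best_value f s < f Sstar / k%:R] <= (#|N|%:R)^-1.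
Proof.
move=> f0 mono sub k1 kn Sk Sopt hm.
have n0 : (0 < #|N|)%N by apply: leq_trans kn.
have [x0 _] := card_gt0P n0.
pose e := [arg max_(i > x0) f [set i]]%O.
have He : forall x, f [set x] <= f [set e].
  by rewrite /e; case: arg_maxP => // i _ H x; exact: H.
have kpos : 0 < (k%:R : R) by rewrite ltr0n.
have key : f Sstar / k%:R <= f [set e].
  have := @sub_bound R N f e sub He Sstar.
  have := mono set0 [set e] (sub0set _).
  rewrite ler_pdivrMr // => h1 h2.
  have hs : (#|Sstar|%:R <= k%:R :> R) by rewrite ler_nat.
  have hk : (1 <= k%:R :> R) by rewrite ler1n.
  have h1' : 0 <= f [set e] - f set0 by rewrite subr_ge0.
  have := ler_wpM2r h1' hs.
  have := f0 set0.
  move: (f set0) (f [set e]) (f Sstar) (#|Sstar|%:R : R) (k%:R : R) h1 h2 hk kpos h1'.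
  move=> a b c d g *.
  nra.
set E := [set s | _].
set Om := ksamples N k m.
pose K' := [set A : {set N} | A \subset [set~ e] & #|A| == k].
pose K := [set A : {set N} | #|A| == k].
have hsub : E :&: Om \subset [set s : {ffun 'I_m -> {set N}} | s \in ffun_on (mem K')].
  apply/subsetP => s; rewrite !inE => /andP[hE hOm]; apply/ffun_onP => i.
  rewrite inE (forallP hOm i) andbT.
  apply/subsetP => y ys; rewrite !inE; apply/eqP => ye.
  move: ys; rewrite ye => es.
  have h1 : f [set e] <= f (s i) by apply: mono; rewrite sub1set.
  have h2 : f (s i) <= best_value f s by rewrite /best_value; exact: le_bigmax.
  by move: hE; rewrite ltNge (le_trans key (le_trans h1 h2)).
have cOm : #|Om| = (#|K| ^ m)%N.
  rewrite -[m in (_ ^ m)%N]card_ord -card_ffun_on; apply: eq_card => s.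
  rewrite !inE; apply/forallP/ffun_onP => H i; [by rewrite inE H | by have := H i; rewrite inE].
have cB : #|[set s : {ffun 'I_m -> {set N}} | s \in ffun_on (mem K')]| = (#|K'| ^ m)%N.
  by rewrite -[m in (_ ^ m)%N]card_ord -card_ffun_on; apply: eq_card => s; rewrite !inE.
have cK : #|K| = 'C(#|N|, k) by rewrite card_draws.
have cK' : #|K'| = 'C(#|N|.-1, k) by rewrite cards_draws cardsC1.
have hab : (#|N| * #|K'| = (#|N| - k) * #|K|)%N by rewrite cK cK' mul_bin_down.
have hb : (0 < #|K|)%N by rewrite cK bin_gt0.
rewrite /uprob.
apply: le_trans (@real_bound R #|K'| #|K| #|N| k m hab hb k1 kn hm).
rewrite -cOm -cB ler_pM2r ?ler_nat ?subset_leq_card //.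
by rewrite invr_gt0 ltr0n cOm expn_gt0 hb.
Qed.
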